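(* Assume that for every $(s,a)$ the probability weights of $\eta_{N,\infty}^{(s,a)}=\sum_{i=1}^N p_i^{(s,a)}(\theta)\delta_{z_i}$ are differentiable in $\theta$, and set $\nabla_\theta\eta_{N,\infty}^{(s,a)}:=\sum_i\nabla_\theta p_i^{(s,a)}(\theta)\delta_{z_i}$ (similarly for $\eta_{N,\infty}^s$). Define $g_{N}(s):=\sum_{a\in\mathcal A}\nabla_\theta\pi_\theta(a\mid s)\,\eta_{N,\infty}^{(s,a)}$. Let $\tau=(s_0,a_0,c_0,s_1,a_1,c_1,\dots)$ be a random trajectory with $s_0=s$, $a_t\sim\pi_\theta(\cdot\mid s_t)$, $c_t=C(s_t,a_t)$, $s_{t+1}\sim P(\cdot\mid s_t,a_t)$, and for $t\ge1$ set $$\tilde{\mathcal B}^{\tau}_t:=\Pi_{\mathcal C}(b_{c_0,\gamma})_\#\circ\Pi_{\mathcal C}(b_{c_1,\gamma})_\#\circ\cdots\circ\Pi_{\mathcal C}(b_{c_{t-1},\gamma})_\#.$$ Then $$\nabla_\theta\eta_{N,\infty}^{s}=\mathbb E_\tau\Big[g_N(s_0)+\sum_{t=1}^{|\tau|}\tilde{\mathcal B}^{\tau}_t\,g_N(s_t)\Big],$$ where $|\tau|$ is the length of the trajectory (the sum being over all $t\ge1$ for an infinite trajectory) and all operators act linearly on ($\mathbb R^d$-valued) signed measures supported on finitely many points.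
   Context: Finite MDP with states $\mathcal S$, actions $\mathcal A$, transition kernel $P$, deterministic costs $C(s,a)\in[c_{\min},c_{\max}]$, discount $\gamma\in[0,1)$, differentiable policies $\pi_\theta$, $\theta\in\mathbb R^d$. Grid: $N\ge2$, $z_i=z_{\min}+(i-1)\frac{z_{\max}-z_{\min}}{N-1}$. Projection $\Pi_{\mathcal C}$: $\Pi_{\mathcal C}\delta_y=\delta_{z_1}$ if $y\le z_1$, $=\delta_{z_N}$ if $y>z_N$, and $=\frac{z_{i+1}-y}{z_{i+1}-z_i}\delta_{z_i}+\frac{y-z_i}{z_{i+1}-z_i}\delta_{z_{i+1}}$ if $z_i<y\le z_{i+1}$, extended linearly to finite signed combinations of Diracs. $b_{c,\gamma}(z)=c+\gamma z$ and $(b_{c,\gamma})_\#\nu(A)=\nu(b_{c,\gamma}^{-1}(A))$. The projected distributional Bellman operator is $(\Pi_{\mathcal C}\mathcal T^\pi\eta)^{(s,a)}=\Pi_{\mathcal C}\big[\sum_{s'}P(s'\mid s,a)\sum_{a'}\pi(a'\mid s')(b_{C(s,a),\gamma})_\#\eta^{(s',a')}\big]$; $\eta_{N,\infty}$ is its unique fixed point among families of distributions on $\{z_1,\dots,z_N\}$, and $\eta_{N,\infty}^s:=\sum_a\pi_\theta(a\mid s)\eta_{N,\infty}^{(s,a)}$. *)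

(* Defs.v *)
From HB Require Import structures.
From mathcomp Require Import all_boot all_order all_algebra.
From mathcomp Require Import all_classical all_reals all_analysis.
Set Implicit Arguments. Unset Strict Implicit. Unset Printing Implicit Defensive.
Import Order.TTheory GRing.Theory Num.Theory.
Import numFieldNormedType.Exports.
Local Open Scope ring_scope.

Section Defs.
Variable R : realType.

(* Grid atoms, 0-indexed: zgrid i = z_{i+1} of the paper,
   z_{i+1} = zmin + i * (zmax - zmin)/(N-1). *)
Definition zgrid (N : nat) (zmin zmax : R) (i : nat) : R :=
  zmin + i%:R * ((zmax - zmin) / (N.-1)%:R).

(* Weight of atom j in Pi_C delta_y. *)
Definition projC (N : nat) (zmin zmax : R) (y : R) (j : 'I_N) : R :=
  let z := @zgrid N zmin zmax in
  if y <= z 0%N then ((j : nat) == 0%N)%:R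
  else if z N.-1 < y then ((j : nat) == N.-1)%:R
  else \sum_(i < N.-1)
        (if (z i < y) && (y <= z i.+1) then
           (if (j : nat) == i then (z i.+1 - y) / (z i.+1 - z i)
            else if (j : nat) == i.+1 then (y - z i) / (z i.+1 - z i)
            else 0)
         else 0).

(* Pi_C (b_{c,gamma})_# acting (linearly) on a V-valued signed measure
   sum_i nu_i delta_{z_i} supported on the grid. *)
Definition pushproj (V : lmodType R) (N : nat) (zmin zmax gamma c : R)
    (nu : 'I_N -> V) : 'I_N -> V :=
  fun j => \sum_(i < N) @projC N zmin zmax (c + gamma * @zgrid N zmin zmax i) j *: nu i.

(* Composition Pi_C(b_{c_0})_# o ... o Pi_C(b_{c_{t-1}})_# for cs = [c_0; ...; c_{t-1}]. *)
Definition compB (V : lmodType R) (N : nat) (zmin zmax gamma : R) (cs : seq R)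
    (nu : 'I_N -> V) : 'I_N -> V :=
  foldr (fun c acc => pushproj zmin zmax gamma c acc) nu cs.

Definition grid_dist_family (S A : finType) (N : nat) (eta : S -> A -> 'I_N -> R) :=
  forall s a, (forall i, 0 <= eta s a i) /\ \sum_(i < N) eta s a i = 1.

(* eta is a fixed point of the projected distributional Bellman operator
   Pi_C T^pi (written out linearly on grid-supported measures). *)
Definition is_proj_bellman_fp (S A : finType) (N : nat) (zmin zmax gamma : R)
    (P : S -> A -> S -> R) (C : S -> A -> R) (pol : S -> A -> R)
    (eta : S -> A -> 'I_N -> R) :=
  forall s a j,
    eta s a j = \sum_(s' : S) P s a s' * \sum_(a' : A) pol s' a' *
        \sum_(i < N) eta s' a' i * @projC N zmin zmax (C s a + gamma * @zgrid N zmin zmax i) j.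

Definition unitv (d : nat) (k : 'I_d) : 'rV[R]_d := \row_l ((l == k)%:R).
Definition grad (d : nat) (f : 'rV[R]_d -> R) (x : 'rV[R]_d) : 'rV[R]_d :=
  \row_k ('D_(unitv k) f x).

Definition gN (S A : finType) (d N : nat) (pi : 'rV[R]_d -> S -> A -> R)
    (eta : S -> A -> 'I_N -> R) (th : 'rV[R]_d) (s : S) : 'I_N -> 'rV[R]_d :=
  fun j => \sum_(a : A) eta s a j *: grad (fun th' => pi th' s a) th.

(* E_tau[ B~_t g(s_t) ] for trajectories started at s (t = 0 gives g(s_0)):
   sum over finite prefixes (s_0,a_0,...,s_{t-1},a_{t-1},s_t) weighted by
   their probability 1[s_0 = s] prod_k pi(a_k|s_k) P(s_{k+1}|s_k,a_k). *)
Definition traj_term (S A : finType) (d N : nat) (zmin zmax gamma : R)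
    (P : S -> A -> S -> R) (C : S -> A -> R) (pol : S -> A -> R)
    (g : S -> 'I_N -> 'rV[R]_d) (s : S) (t : nat) : 'I_N -> 'rV[R]_d :=
  fun j => \sum_(ss : {ffun 'I_t.+1 -> S}) \sum_(acts : {ffun 'I_t -> A})
    (((ss ord0 == s)%:R *
      \prod_(k < t) (pol (ss (widen_ord (leqnSn t) k)) (acts k) *
                     P (ss (widen_ord (leqnSn t) k)) (acts k) (ss (lift ord0 k)))) *:
     compB zmin zmax gamma
       [seq C (ss (widen_ord (leqnSn t) k)) (acts k) | k <- enum 'I_t]
       (g (ss ord_max)) j).

End Defs.

(* Main.v *)
Require Import Defs.
From HB Require Import structures.
From mathcomp Require Import all_boot all_order all_algebra.
From mathcomp Require Import all_classical all_reals all_analysis.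
From mathcomp Require Import zify ring lra.
Import Order.TTheory GRing.Theory Num.Theory.
Import numFieldNormedType.Exports.
Local Open Scope classical_set_scope.
Local Open Scope ring_scope.
Section PartA.
Variable R : realType.

Definition clamp (m x : R) : R := if x <= 0 then 0 else if m <= x then m else x.

Lemma clamp_ge0 m x : 0 <= m -> 0 <= clamp m x.
Proof. rewrite /clamp => hm; case: (leP x 0) => h //; case: (leP m x) => h2; lra. Qed.

Lemma clamp_le m x : 0 <= m -> clamp m x <= m.
Proof. rewrite /clamp => hm; case: (leP x 0) => h //; case: (leP m x) => h2; lra. Qed.

Lemma clamp_mono m x y : 0 <= m -> x <= y -> clamp m x <= clamp m y.
Proof.
rewrite /clamp => hm hxy; case: (leP x 0) => h1; case: (leP y 0) => h2;
  case: (leP m x) => h3; case: (leP m y) => h4; lra.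
Qed.

Lemma clamp_lip m x y : 0 <= m -> x <= y -> clamp m y - clamp m x <= y - x.
Proof.
rewrite /clamp => hm hxy; case: (leP x 0) => h1; case: (leP y 0) => h2;
  case: (leP m x) => h3; case: (leP m y) => h4; lra.
Qed.

Lemma clamp_sum n x :
  \sum_(i < n) clamp 1 (i.+1%:R - x) = clamp n%:R (n%:R - x).
Proof.
elim: n => [|n IH]; first by rewrite big_ord0 /clamp; case: ifP => // h; case: ifP => // h2; move: h h2; rewrite sub0r oppr_le0 => /negbT; rewrite -ltNge => h /negbT; rewrite -ltNge; lra.
rewrite big_ord_recr /= IH -natr1.
have hn : 0 <= n%:R :> R by [].
rewrite /clamp; case: (leP (n%:R - x) 0) => h1; case: (leP (n%:R + 1 - x) 0) => h2;
  case: (leP n%:R (n%:R - x)) => h3; case: (leP 1 (n%:R + 1 - x)) => h4;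
  case: (leP (n%:R + 1) (n%:R + 1 - x)) => h5; lra.
Qed.

Lemma sum_ind (i k : nat) (x : R) :
  \sum_(m < i.+1) (if (m : nat) == k then x else 0) = if (k <= i)%N then x else 0.
Proof.
elim: i => [|i IH]; first by rewrite big_ord1; case: k.
rewrite big_ord_recr /= IH.
have [hk|hk] := leqP k i.
  rewrite (leqW hk) (_ : (i.+1 == k) = false) ?addr0 //.
  by apply/negbTE; rewrite neq_ltn ltnS hk orbT.
by rewrite add0r eq_sym eqn_leq hk andbT.
Qed.

Variables (n : nat) (zmin zmax : R).
Hypothesis hn : (0 < n)%N.
Hypothesis hz : zmin < zmax.

Let D := (zmax - zmin) / n%:R.
Lemma Dpos : 0 < D.
Proof. by rewrite /D divr_gt0 // ?subr_gt0 // ltr0n. Qed.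

Local Notation z i := (zgrid n.+1 zmin zmax i).

Lemma zgridE i : z i = zmin + i%:R * D.
Proof. by []. Qed.

Lemma zgridS i : z i.+1 = z i + D.
Proof. by rewrite !zgridE -natr1 mulrDl mul1r addrA. Qed.

Lemma zgrid_le a b : (a <= b)%N -> z a <= z b.
Proof.
move=> hab; rewrite !zgridE lerD2l ler_pM2r ?Dpos //.
by rewrite ler_nat.
Qed.

Lemma zgrid_lt a b : (a < b)%N -> z a < z b.
Proof.
move=> hab; rewrite !zgridE ltrD2l ltr_pM2r ?Dpos //.
by rewrite ltr_nat.
Qed.

Lemma projC_lo y j : y <= z 0 -> @projC R n.+1 zmin zmax y j = ((j:nat) == 0)%:R.
Proof. by rewrite /projC /= => ->. Qed.

Lemma projC_hi y j : z n < y -> @projC R n.+1 zmin zmax y j = ((j:nat) == n)%:R.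
Proof.
move=> h; rewrite /projC /=.
have h0 : z 0 < y by apply: le_lt_trans h; apply: zgrid_le.
by rewrite leNgt h0 /= h.
Qed.

Lemma projC_mid y j k : (k < n)%N -> z k < y -> y <= z k.+1 ->
  @projC R n.+1 zmin zmax y j =
  (if (j:nat) == k then (z k.+1 - y) / D else 0) +
  (if (j:nat) == k.+1 then (y - z k) / D else 0).
Proof.
move=> hk h1 h2; rewrite /projC /=.
have h0 : z 0 < y by apply: le_lt_trans h1; apply: zgrid_le.
have hn' : y <= z n by apply: (le_trans h2); apply: zgrid_le.
rewrite leNgt h0 /= ltNge hn' /=.
rewrite (bigD1 (Ordinal hk)) //= h1 h2 /= big1 ?addr0; last first.
  move=> i /eqP ik.
  have ik' : (i : nat) != k by apply/eqP => e; apply: ik; apply: val_inj.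
  case: (ltngtP i k) => hik.
  - have : y <= z i.+1 = false.
      by apply/negbTE; rewrite -ltNge; apply: le_lt_trans h1; apply: zgrid_le.
    by move=> ->; rewrite andbF.
  - have : z i < y = false.
    by apply/negbTE; rewrite -leNgt; apply: (le_trans h2); apply: zgrid_le.
    by move=> ->.
  - by rewrite hik eqxx in ik'.
have -> : z k.+1 - z k = D by rewrite zgridS; ring.
have [->|jk] := eqVneq (j:nat) k.
  by rewrite (_ : (k == k.+1) = false) ?addr0 //; elim: k {hk h1 h2}.
by rewrite add0r; case: eqP.
Qed.

Lemma projC_ex y : z 0 < y -> y <= z n ->
  exists k, [/\ (k < n)%N, z k < y & y <= z k.+1].
Proof.
move=> h0; suff : forall m, (m <= n)%N -> y <= z m ->
  exists k, [/\ (k < m)%N, z k < y & y <= z k.+1].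
  by move=> H /(H n (leqnn n)) [k [hk ? ?]]; exists k.
elim=> [|m IH] hm hy; first by move: h0; rewrite ltNge hy.
have [hy'|hy'] := leP y (z m).
  by have [k [? ? ?]] := IH (ltnW hm) hy'; exists k; split => //; apply: ltnW.
by exists m.
Qed.

Lemma cdf_projC y i : (i <= n)%N ->
  \sum_(m < i.+1) @projC R n.+1 zmin zmax y (inord m) =
  if (i < n)%N then clamp 1 ((z i.+1 - y) / D) else 1.
Proof.
move=> hi.
have hD := Dpos.
have hinord : forall m : 'I_i.+1, (inord m : 'I_n.+1) = m :> nat.
  by move=> m; rewrite inordK // ltnS (leq_trans _ hi) // -ltnS.
have [hy|hy] := leP y (z 0).
  rewrite (eq_bigr (fun m : 'I_i.+1 => if (m:nat) == 0%N then 1 else 0)); last first.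
    by move=> m _; rewrite projC_lo // hinord; case: eqP.
  rewrite sum_ind /=; case: ifP => // _.
  have h1 : z 0 + D <= z i.+1 by rewrite -zgridS zgrid_le.
  rewrite /clamp ler_pdivlMr // mul1r.
  have -> : (z i.+1 - y) / D <= 0 = false.
    by apply/negbTE; rewrite -ltNge divr_gt0 // subr_gt0; lra.
  by have -> : D <= z i.+1 - y by lra.
have [hy2|hy2] := ltP (z n) y.
  rewrite (eq_bigr (fun m : 'I_i.+1 => if (m:nat) == n then 1 else 0)); last first.
    by move=> m _; rewrite projC_hi // hinord; case: eqP.
  rewrite sum_ind /=; have [hin|hin] := ltnP i n.
    rewrite /clamp.
    have -> // : (z i.+1 - y) / D <= 0.
    rewrite pmulr_lle0 ?invr_gt0 // subr_le0; apply: ltW; apply: le_lt_trans hy2.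
    exact: zgrid_le.
  by [].

have [k [hk h1 h2]] := @projC_ex y hy hy2.
rewrite (eq_bigr (fun m : 'I_i.+1 =>
  (if (m:nat) == k then (z k.+1 - y) / D else 0) +
  (if (m:nat) == k.+1 then (y - z k) / D else 0))); last first.
  by move=> m _; rewrite (@projC_mid y _ k hk) // hinord.
rewrite big_split /= !sum_ind.
have hzk : z k.+1 = z k + D by rewrite zgridS.
have hsum : (z k.+1 - y) / D + (y - z k) / D = 1.
  by rewrite -mulrDl hzk (_ : z k + D - y + (y - z k) = D) ?divff //; [lra | ring].
have [hin|hin] := ltnP i n.
- have [hik|hik] := leqP k i.
  + have [hik2|hik2] := leqP k.+1 i.
    * rewrite hsum /clamp.
      have h3 : z k.+2 <= z i.+1 by apply: zgrid_le.
      have hzk2 : z k.+2 = z k.+1 + D by rewrite zgridS.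
      have -> : (z i.+1 - y) / D <= 0 = false.
        by apply/negbTE; rewrite -ltNge divr_gt0 // subr_gt0; lra.
      by rewrite ler_pdivlMr // mul1r (_ : D <= z i.+1 - y) //; lra.
    * have ei : i = k by apply/eqP; rewrite eqn_leq hik -ltnS hik2.
      rewrite ei.
      have ha0 : 0 <= (z k.+1 - y)/D by rewrite divr_ge0 // ?subr_ge0 // ltW.
      have ha1 : (z k.+1 - y)/D < 1 by rewrite ltr_pdivrMr // mul1r; lra.
      rewrite addr0 /clamp; case: leP => h; first lra.
      by case: leP => h'; lra.
  + rewrite (_ : (k.+1 <= i)%N = false); last by apply/negbTE; rewrite -ltnNge ltnS ltnW.
    rewrite addr0 /clamp.
    have -> // : (z i.+1 - y) / D <= 0.
    rewrite pmulr_lle0 ?invr_gt0 // subr_le0; apply: ltW; apply: le_lt_trans h1.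
    exact: zgrid_le.
- have ein : i = n by apply/eqP; rewrite eqn_leq hi hin.
  rewrite ein (ltnW hk) hk; exact: hsum.
Qed.


Variable gamma : R.
Hypothesis hg : 0 <= gamma.

Lemma inord_sum (F : 'I_n.+1 -> R) : \sum_(j < n.+1) F j = \sum_(m < n.+1) F (inord m).
Proof. by apply: eq_bigr => j _; rewrite inord_val. Qed.

Lemma projC_mass y : \sum_(j < n.+1) @projC R n.+1 zmin zmax y j = 1.
Proof. by rewrite inord_sum cdf_projC // ltnn. Qed.

Definition pref (nu : 'I_n.+1 -> R) (t : nat) := \sum_(m < t) nu (inord m).
Definition nrm (nu : 'I_n.+1 -> R) := \sum_(i < n) `|pref nu i.+1|.

Local Notation pp c nu := (@pushproj R R n.+1 zmin zmax gamma c nu).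

Lemma pp_mass c nu : \sum_j nu j = 0 -> \sum_j pp c nu j = 0.
Proof.
move=> h; rewrite /pushproj exchange_big /=.
rewrite (eq_bigr (fun i => nu i)) ?h // => i _.
by rewrite -scaler_suml projC_mass scale1r.
Qed.

Lemma abel (nu a : nat -> R) k :
  \sum_(l < k.+1) nu l * a l =
  \sum_(l < k) (\sum_(m < l.+1) nu m) * (a l - a l.+1) + (\sum_(m < k.+1) nu m) * a k.
Proof.
elim: k => [|k IH]; first by rewrite big_ord0 add0r !big_ord1.
rewrite big_ord_recr /= IH [in RHS]big_ord_recr /=.
have -> : \sum_(m < k.+2) nu m = \sum_(m < k.+1) nu m + nu k.+1 by rewrite big_ord_recr.
set F := \sum_(m < k.+1) nu m; ring.
Qed.

Definition aa i x := clamp 1 ((zgrid n.+1 zmin zmax i.+1 - x) / D).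

Lemma aaE i x : aa i x = clamp 1 (i.+1%:R - (x - zmin) / D).
Proof.
rewrite /aa zgridE; congr clamp.
have hD := Dpos; field; lra.
Qed.

Lemma aa_mono i x x' : x <= x' -> aa i x' <= aa i x.
Proof.
move=> h; rewrite !aaE; apply: clamp_mono => //.
rewrite lerD2l lerN2 ler_pM2r ?invr_gt0 ?Dpos //; lra.
Qed.

Lemma sum_aa_diff x x' : x <= x' ->
  \sum_(i < n) (aa i x - aa i x') <= (x' - x) / D.
Proof.
move=> h; rewrite sumrB.
rewrite (eq_bigr _ (fun (i : 'I_n) _ => aaE i x)) (eq_bigr _ (fun (i : 'I_n) _ => aaE i x')).
rewrite !clamp_sum.
have hD := Dpos.
have -> : (x' - x) / D = (n%:R - (x - zmin) / D) - (n%:R - (x' - zmin) / D) by field; lra.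
apply: clamp_lip => //.
rewrite lerD2l lerN2 ler_pM2r ?invr_gt0 ?Dpos //; lra.
Qed.

Lemma pref_pp c nu i : (i < n)%N ->
  pref (pp c nu) i.+1 =
  \sum_(l < n.+1) nu (inord l) * aa i (c + gamma * zgrid n.+1 zmin zmax l).
Proof.
move=> hi; rewrite /pref /pushproj exchange_big /=.
apply: eq_bigr => l _; rewrite inord_val.
rewrite -scaler_suml (@cdf_projC _ i) ?(ltnW hi) // hi /aa.
exact: mulrC.
Qed.

Lemma nrm_ge0 nu : 0 <= nrm nu.
Proof. by apply: sumr_ge0 => i _. Qed.

Lemma pp_contr c nu : \sum_j nu j = 0 -> nrm (pp c nu) <= gamma * nrm nu.
Proof.
move=> h0.
have hD := Dpos.
set zz := fun l : nat => zgrid n.+1 zmin zmax l.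
have step : forall i : 'I_n, `|pref (pp c nu) i.+1| <=
    \sum_(l < n) `|pref nu l.+1| * (aa i (c + gamma * zz l) - aa i (c + gamma * zz l.+1)).
  move=> i; rewrite pref_pp //.
  rewrite (abel (fun l => nu (inord l)) (fun l => aa i (c + gamma * zz l))).
  have -> : \sum_(m < n.+1) nu (inord m) = 0 by rewrite -inord_sum.
  rewrite mul0r addr0.
  apply: le_trans (ler_norm_sum _ _ _) _.
  apply: ler_sum => l _.
  rewrite normrM (@ger0_norm _ (_ - _)) //.
  rewrite subr_ge0; apply: aa_mono; rewrite lerD2l; apply: ler_wpM2l => //.
  exact: zgrid_le.
rewrite /nrm; apply: le_trans (ler_sum _ (fun i _ => step i)) _.
rewrite exchange_big /= mulr_sumr; apply: ler_sum => l _.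
rewrite -mulr_sumr mulrC; apply: ler_wpM2r => //.
apply: (le_trans (@sum_aa_diff (c + gamma * zz l) (c + gamma * zz l.+1) _)).
  by rewrite lerD2l; apply: ler_wpM2l => //; apply: zgrid_le.
rewrite /zz zgridS.
have -> : c + gamma * (zgrid n.+1 zmin zmax l + D) - (c + gamma * zgrid n.+1 zmin zmax l) = gamma * D by ring.
by rewrite mulfK // gt_eqF.
Qed.

Lemma pref_le nu t : \sum_j nu j = 0 -> (t <= n.+1)%N -> `|pref nu t| <= nrm nu.
Proof.
move=> h0 ht; case: t ht => [|t] ht.
  by rewrite /pref big_ord0 normr0 nrm_ge0.
have [htn|htn] := ltnP t n.
  rewrite /nrm (bigD1 (Ordinal htn)) //= lerDl; exact: sumr_ge0.
have -> : t = n by apply/eqP; rewrite eqn_leq htn -ltnS ht.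
by rewrite /pref -inord_sum h0 normr0 nrm_ge0.
Qed.

Lemma coord_le nu j : \sum_j nu j = 0 -> `|nu j| <= 2 * nrm nu.
Proof.
move=> h0.
have -> : nu j = pref nu j.+1 - pref nu j by rewrite /pref big_ord_recr /= inord_val; ring.
apply: le_trans (ler_normB _ _) _.
rewrite mulr2n mulrDl mul1r; apply: lerD; apply: pref_le => //.
by apply: ltnW.
Qed.

Lemma nrm_lin (I : finType) (w : I -> R) (F : I -> 'I_n.+1 -> R) :
  nrm (fun j => \sum_x w x * F x j) <= \sum_x `|w x| * nrm (F x).
Proof.
rewrite /nrm.
have e : forall t, pref (fun j => \sum_x w x * F x j) t = \sum_x w x * pref (F x) t.
  by move=> t; rewrite /pref exchange_big /=; apply: eq_bigr => x _; rewrite mulr_sumr.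
under eq_bigr do rewrite e.
apply: le_trans (ler_sum _ (fun i _ => ler_norm_sum _ _ _)) _.
rewrite exchange_big /=; apply: ler_sum => x _.
by rewrite mulr_sumr; apply: ler_sum => i _; rewrite normrM.
Qed.



Variables (S A : finType) (P : S -> A -> S -> R) (C : S -> A -> R) (pol : S -> A -> R).
Hypothesis hP : forall s a, (forall s', 0 <= P s a s') /\ \sum_(s' : S) P s a s' = 1.
Hypothesis hpol : forall s, (forall a, 0 <= pol s a) /\ \sum_(a : A) pol s a = 1.

Definition MopV (V : lmodType R) (h : S -> 'I_n.+1 -> V) : S -> 'I_n.+1 -> V :=
  fun s j => \sum_a pol s a *: \sum_s' P s a s' *: pushproj zmin zmax gamma (C s a) (h s') j.
Arguments MopV {V} h _ _.

Lemma Mop_mass (h : S -> 'I_n.+1 -> R) :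
  (forall s, \sum_j h s j = 0) -> forall s, \sum_j MopV h s j = 0.
Proof.
move=> h0 s; rewrite /MopV exchange_big /= big1 // => a _.
rewrite -scaler_sumr exchange_big /= big1 ?scaler0 // => s' _.
by rewrite -scaler_sumr pp_mass ?scaler0.
Qed.

Lemma Mop_nrm (h : S -> 'I_n.+1 -> R) B :
  (forall s, \sum_j h s j = 0) -> (forall s, nrm (h s) <= B) ->
  forall s, nrm (MopV h s) <= gamma * B.
Proof.
move=> h0 hB s.
have hB0 : 0 <= B.
  exact: le_trans (nrm_ge0 _) (hB s).
rewrite (_ : MopV h s = fun j => \sum_a pol s a * (fun a j => \sum_s' P s a s' * pushproj zmin zmax gamma (C s a) (h s') j) a j) //.
apply: le_trans (nrm_lin _ (pol s) _) _.
have -> : gamma * B = \sum_a `|pol s a| * (gamma * B).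
  by rewrite -mulr_suml (eq_bigr (fun a => pol s a)) ?(hpol s).2 ?mul1r // => a _; rewrite ger0_norm // (hpol s).1.
apply: ler_sum => a _; apply: ler_wpM2l => //.
apply: le_trans (nrm_lin _ (P s a) (fun s' j => pushproj zmin zmax gamma (C s a) (h s') j)) _.
have -> : gamma * B = \sum_s' `|P s a s'| * (gamma * B).
  by rewrite -mulr_suml (eq_bigr (fun s' => P s a s')) ?(hP s a).2 ?mul1r // => s' _; rewrite ger0_norm // (hP s a).1.
apply: ler_sum => s' _; apply: ler_wpM2l => //.
apply: le_trans (pp_contr _ _ (h0 s')) _.
by apply: ler_wpM2l.
Qed.



Lemma iter_bound (h : S -> 'I_n.+1 -> R) : (forall s, \sum_j h s j = 0) ->
  forall t, (forall s, \sum_j iter t (@MopV R) h s j = 0) /\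
            (forall s, nrm (iter t (@MopV R) h s) <= gamma ^+ t * \sum_s nrm (h s)).
Proof.
move=> h0; elim=> [|t [IH1 IH2]] /=.
  split => // s; rewrite expr0 mul1r (bigD1 s) //= lerDl.
  by apply: sumr_ge0 => s' _; apply: nrm_ge0.
split; first exact: Mop_mass.
by move=> s; rewrite exprS -mulrA; apply: Mop_nrm.
Qed.

Lemma iter_coord (h : S -> 'I_n.+1 -> R) : (forall s, \sum_j h s j = 0) ->
  forall t s j, `|iter t (@MopV R) h s j| <= 2 * (gamma ^+ t * \sum_s nrm (h s)).
Proof.
move=> h0 t s j; have [H1 H2] := iter_bound _ h0 t.
apply: le_trans (coord_le _ j (H1 s)) _.
by apply: ler_wpM2l => //.
Qed.

End PartA.

Definition consf (T : Type) (m : nat) (x : T) (f : {ffun 'I_m -> T}) : {ffun 'I_m.+1 -> T} :=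
  [ffun i => if unlift ord0 i is Some i' then f i' else x].
Arguments consf {T m} x f.

Lemma consf0 (T : Type) m x (f : {ffun 'I_m -> T}) : consf x f ord0 = x.
Proof. by rewrite /consf ffunE unlift_none. Qed.

Lemma consfS (T : Type) m x (f : {ffun 'I_m -> T}) i : consf x f (lift ord0 i) = f i.
Proof. by rewrite /consf ffunE liftK. Qed.

Lemma sum_consf (T : finType) (V : zmodType) m (F : {ffun 'I_m.+1 -> T} -> V) :
  \sum_ff F ff = \sum_x \sum_(f : {ffun 'I_m -> T}) F (consf x f).
Proof.
rewrite pair_big /=.
rewrite (reindex (fun p : T * {ffun 'I_m -> T} => consf p.1 p.2)) //.
exists (fun ff : {ffun 'I_m.+1 -> T} => (ff ord0, [ffun i => ff (lift ord0 i)])).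
  move=> [x f] _ /=; rewrite consf0; congr pair; apply/ffunP => i.
  by rewrite ffunE consfS.
move=> ff _ /=; apply/ffunP => i; rewrite /consf ffunE.
by case: unliftP => [j ->|->]; rewrite ?ffunE.
Qed.

Section Traj.
Variables (R : realType) (n d : nat) (zmin zmax gamma : R) (S A : finType)
  (P : S -> A -> S -> R) (C : S -> A -> R) (pol : S -> A -> R).

Local Notation M := (@MopV R n zmin zmax gamma S A P C pol _).

Lemma pp_sum (V : lmodType R) c (I : finType) (F : I -> 'I_n.+1 -> V) j :
  pushproj zmin zmax gamma c (fun j' => \sum_x F x j') j =
  \sum_x pushproj zmin zmax gamma c (F x) j.
Proof.
rewrite /pushproj exchange_big /=; apply: eq_bigr => i _.
by rewrite scaler_sumr.
Qed.

Lemma pp_scale (V : lmodType R) c w (F : 'I_n.+1 -> V) j :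
  pushproj zmin zmax gamma c (fun j' => w *: F j') j =
  w *: pushproj zmin zmax gamma c F j.
Proof.
rewrite /pushproj scaler_sumr; apply: eq_bigr => i _.
by rewrite !scalerA mulrC.
Qed.

Lemma widen0 m : widen_ord (leqnSn m.+1) (ord0 : 'I_m.+1) = ord0 :> 'I_m.+2.
Proof. exact: val_inj. Qed.
Lemma widenS m (k : 'I_m) :
  widen_ord (leqnSn m.+1) (lift ord0 k) = lift ord0 (widen_ord (leqnSn m) k).
Proof. exact: val_inj. Qed.
Lemma maxS m : (ord_max : 'I_m.+2) = lift ord0 (ord_max : 'I_m.+1).
Proof. exact: val_inj. Qed.

Variable g : S -> 'I_n.+1 -> 'rV[R]_d.

Lemma prod_consf t (x : S) (f : {ffun 'I_t.+1 -> S}) (a : A) (acts : {ffun 'I_t -> A}) :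
 \prod_(k < t.+1) (pol (consf x f (widen_ord (leqnSn t.+1) k)) (consf a acts k) *
     P (consf x f (widen_ord (leqnSn t.+1) k)) (consf a acts k) (consf x f (lift ord0 k)))
 = (pol x a * P x a (f ord0)) * \prod_(k < t) (pol (f (widen_ord (leqnSn t) k)) (acts k) *
     P (f (widen_ord (leqnSn t) k)) (acts k) (f (lift ord0 k))).
Proof.
rewrite big_ord_recl widen0 !consf0 consfS; congr (_ * _); apply: eq_bigr => k _.
by rewrite widenS !consfS.
Qed.

Lemma seq_consf t (x : S) (f : {ffun 'I_t.+1 -> S}) (a : A) (acts : {ffun 'I_t -> A}) :
  [seq C (consf x f (widen_ord (leqnSn t.+1) k)) (consf a acts k) | k <- enum 'I_t.+1] =
  C x a :: [seq C (f (widen_ord (leqnSn t) k)) (acts k) | k <- enum 'I_t].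
Proof.
rewrite enum_ordSl /= widen0 !consf0; congr cons; rewrite -map_comp; apply: eq_map => k /=.
by rewrite widenS !consfS.
Qed.

Lemma compB_cons (V : lmodType R) c cs (nu : 'I_n.+1 -> V) :
  compB zmin zmax gamma (c :: cs) nu = pushproj zmin zmax gamma c (compB zmin zmax gamma cs nu).
Proof. by []. Qed.

Lemma traj0 s j : traj_term zmin zmax gamma P C pol g s 0 j = g s j.
Proof.
rewrite /traj_term (@sum_consf S _ 0).
have e0 : enum 'I_0 = [::] by apply: size0nil; rewrite size_enum_ord.
have em : (ord_max : 'I_1) = ord0 by apply: val_inj.
under eq_bigr => x _ do under eq_bigr => f _ do under eq_bigr => acts _ do
  rewrite em consf0 big_ord0 mulr1 e0 /=.
under eq_bigr => x _ do under eq_bigr => f _ do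
  rewrite sumr_const card_ffun !card_ord expn0 mulr1n.
under eq_bigr => x _ do rewrite sumr_const card_ffun !card_ord expn0 mulr1n.
rewrite (bigD1 s) //= eqxx scale1r [X in _ + X]big1 ?addr0 // => x hx.
by rewrite (_ : (x == s) = false) ?scale0r //; apply/negbTE.
Qed.



Lemma trajS s t j : traj_term zmin zmax gamma P C pol g s t.+1 j =
  M (fun s' => traj_term zmin zmax gamma P C pol g s' t) s j.
Proof.
rewrite /traj_term (@sum_consf S _ t.+1) (bigD1 s) //= [X in _ + X]big1 ?addr0; last first.
  move=> x hx; have xs : (x == s) = false by apply/negbTE.
  apply: big1 => f _; rewrite (@sum_consf A _ t); apply: big1 => a _.
  by apply: big1 => acts _; rewrite consf0 xs mul0r scale0r.
under eq_bigr => f _ do rewrite (@sum_consf A _ t).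
rewrite exchange_big /= /MopV; apply: eq_bigr => a _.
under eq_bigr => f _ do under eq_bigr => acts _ do
  rewrite consf0 eqxx mul1r prod_consf seq_consf maxS consfS compB_cons.
under [in RHS]eq_bigr => s' _ do rewrite pp_sum.
under [in RHS]eq_bigr => s' _ do under eq_bigr => f _ do rewrite pp_sum.
under [in RHS]eq_bigr => s' _ do under eq_bigr => f _ do under eq_bigr => acts _ do rewrite pp_scale.
under [in RHS]eq_bigr => s' _ do rewrite scaler_sumr.
rewrite [in RHS]exchange_big /= [in RHS]scaler_sumr; apply: eq_bigr => f _.
under [in RHS]eq_bigr => s' _ do rewrite scaler_sumr.
rewrite [in RHS]exchange_big /= [in RHS]scaler_sumr; apply: eq_bigr => acts _.
rewrite (bigD1 (f ord0)) //= eqxx mul1r [X in _ + X]big1 ?addr0; last first.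
  move=> s'' hs''; rewrite (_ : (f ord0 == s'') = false) ?mul0r ?scale0r ?scaler0 //.
  by apply/negbTE; rewrite eq_sym.
by rewrite !scalerA.
Qed.

Lemma traj_iter t s j : traj_term zmin zmax gamma P C pol g s t j = iter t M g s j.
Proof.
elim: t s j => [|t IH] s j; first exact: traj0.
rewrite trajS /=; congr (M _ s j).
by apply/funext => s'; apply/funext => j'; apply: IH.
Qed.

End Traj.

Section Deriv.
Variable R : realType.
Variables (d : nat).

Lemma isd_sum (I : finType) (h : I -> 'rV[R]_d -> R) x v (dh : I -> R) :
  (forall i, is_derive x v (h i) (dh i)) ->
  is_derive x v (fun y => \sum_i h i y) (\sum_i dh i).
Proof.
move=> H; rewrite -fct_sumE.
by elim/big_ind2 : _ => //; [exact: is_derive_cst| move=> *; exact: is_deriveD].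
Qed.
Lemma isd_mul (f g : 'rV[R]_d -> R) x v df dg :
  is_derive x v f df -> is_derive x v g dg ->
  is_derive x v (fun y => f y * g y) (f x * dg + g x * df).
Proof. move=> H1 H2. have := is_deriveM H1 H2. by []. Qed.
Lemma isd_cmul (f : 'rV[R]_d -> R) c x v df :
  is_derive x v f df -> is_derive x v (fun y => c * f y) (c * df).
Proof. move=> H1. have := is_deriveM (is_derive_cst c x v) H1.
by rewrite scaler0 addr0. Qed.
Lemma isd_mulc (f : 'rV[R]_d -> R) c x v df :
  is_derive x v f df -> is_derive x v (fun y => f y * c) (df * c).
Proof. move=> H1. have := is_deriveM H1 (is_derive_cst c x v).
rewrite scaler0 add0r [df * c]mulrC; exact. Qed.
Lemma isdD (f : 'rV[R]_d -> R) x v df : is_derive x v f df -> 'D_v f x = df.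
Proof. by case. Qed.

Variables (n : nat) (zmin zmax gamma : R) (S A : finType)
  (P : S -> A -> S -> R) (C : S -> A -> R)
  (pi : 'rV[R]_d -> S -> A -> R) (p : 'rV[R]_d -> S -> A -> 'I_n.+1 -> R).
Hypothesis hpi : forall th s, (forall a, 0 <= pi th s a) /\ \sum_(a : A) pi th s a = 1.
Hypothesis hpidiff : forall s a th, differentiable (fun th' => pi th' s a) th.
Hypothesis hfp : forall th, grid_dist_family (p th) /\
              is_proj_bellman_fp zmin zmax gamma P C (pi th) (p th).
Hypothesis hpdiff : forall s a i th, differentiable (fun th' => p th' s a i) th.
Variables (th v : 'rV[R]_d).

Definition dpi s a := 'D_v (fun th' => pi th' s a) th.
Definition dq s a j := 'D_v (fun th' => p th' s a j) th.
Definition Vd s j := 'D_v (fun th' => \sum_a pi th' s a * p th' s a j) th.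
Definition Gd s j := \sum_a p th s a j * dpi s a.

Lemma hpid s a : is_derive th v (fun th' => pi th' s a) (dpi s a).
Proof. apply: derivableP; apply: diff_derivable; exact: hpidiff. Qed.
Lemma hpd s a i : is_derive th v (fun th' => p th' s a i) (dq s a i).
Proof. apply: derivableP; apply: diff_derivable; exact: hpdiff. Qed.

Lemma VdE s j : Vd s j = \sum_a (pi th s a * dq s a j + p th s a j * dpi s a).
Proof. apply: isdD; apply: isd_sum => a; exact: isd_mul (hpid s a) (hpd s a j). Qed.

Local Notation prj s a j i := (@projC R n.+1 zmin zmax (C s a + gamma * zgrid n.+1 zmin zmax i) j).

Lemma dqE s a j : dq s a j = \sum_s' P s a s' * \sum_a'
   (pi th s' a' * (\sum_i dq s' a' i * prj s a j i) + (\sum_i p th s' a' i * prj s a j i) * dpi s' a').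
Proof.
have Hf : (fun th' => p th' s a j) = (fun th' => \sum_s' P s a s' * \sum_a' pi th' s' a' *
     \sum_i p th' s' a' i * prj s a j i).
  by apply/funext => th'; rewrite ((hfp th').2 s a j).
rewrite /dq Hf; apply: isdD.
apply: isd_sum => s'; apply: isd_cmul; apply: isd_sum => a'.
apply: isd_mul; first exact: hpid.
by apply: isd_sum => i; apply: isd_mulc; exact: hpd.
Qed.

Lemma sE (x y : R) : x *: y = x * y. Proof. by []. Qed.

Lemma VdG s j : Vd s j = Gd s j + @MopV R n zmin zmax gamma S A P C (pi th) R Vd s j.
Proof.
rewrite VdE /Gd /MopV big_split /= addrC; congr (_ + _).
apply: eq_bigr => a _; rewrite sE; congr (_ * _).
rewrite dqE; apply: eq_bigr => s' _; rewrite sE; congr (_ * _).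
rewrite /pushproj.
under [RHS]eq_bigr => i _ do rewrite VdE sE mulr_sumr.
rewrite [RHS]exchange_big /=; apply: eq_bigr => a' _.
rewrite mulr_sumr mulr_suml -big_split /=; apply: eq_bigr => i _; ring.
Qed.

Lemma sum_dq s a : \sum_j dq s a j = 0.
Proof.
have H : is_derive th v (fun th' => \sum_j p th' s a j) (\sum_j dq s a j).
  by apply: isd_sum => j; exact: hpd.
rewrite -(isdD _ _ _ _ H).
have -> : (fun th' => \sum_j p th' s a j) = cst 1.
  by apply/funext => th'; rewrite ((hfp th').1 s a).2.
exact: derive_cst.
Qed.

Lemma sum_dpi s : \sum_a dpi s a = 0.
Proof.
have H : is_derive th v (fun th' => \sum_a pi th' s a) (\sum_a dpi s a).
  by apply: isd_sum => a; exact: hpid.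
rewrite -(isdD _ _ _ _ H).
have -> : (fun th' => \sum_a pi th' s a) = cst 1.
  by apply/funext => th'; rewrite (hpi th' s).2.
exact: derive_cst.
Qed.

Lemma sum_Vd s : \sum_j Vd s j = 0.
Proof.
under eq_bigr => j _ do rewrite VdE.
rewrite exchange_big /= (eq_bigr (fun a => dpi s a)) ?sum_dpi // => a _.
rewrite big_split /= -mulr_sumr -mulr_suml sum_dq ((hfp th).1 s a).2; ring.
Qed.

End Deriv.

Section Glue.
Variables (R : realType) (n : nat) (zmin zmax gamma : R) (S A : finType)
  (P : S -> A -> S -> R) (C : S -> A -> R) (pol : S -> A -> R).
Local Notation MV V := (MopV R n zmin zmax gamma S A P C pol V).

Lemma Mop_comp d (h : S -> 'I_n.+1 -> 'rV[R]_d) s j k :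
  (MV _ h s j) 0 k = MV R (fun s j => h s j 0 k) s j.
Proof.
rewrite /MopV /pushproj summxE; apply: eq_bigr => a _; rewrite mxE summxE; congr (_ * _).
apply: eq_bigr => s' _; rewrite mxE summxE; congr (_ * _).
by apply: eq_bigr => i _; rewrite mxE.
Qed.

Lemma iter_comp d (h : S -> 'I_n.+1 -> 'rV[R]_d) t s j k :
  (iter t (MV _) h s j) 0 k = iter t (MV R) (fun s j => h s j 0 k) s j.
Proof.
elim: t s j => [|t IH] s j //=.
rewrite Mop_comp; congr (MV R _ s j).
by apply/funext => s'; apply/funext => j'; apply: IH.
Qed.

Lemma Mop_add (h1 h2 : S -> 'I_n.+1 -> R) s j :
  MV R (fun s j => h1 s j + h2 s j) s j = MV R h1 s j + MV R h2 s j.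
Proof.
rewrite /MopV -big_split /=; apply: eq_bigr => a _; rewrite -scalerDr -big_split /=.
congr (_ *: _); apply: eq_bigr => s' _; rewrite -scalerDr; congr (_ *: _).
by rewrite /pushproj -big_split /=; apply: eq_bigr => i _; rewrite scalerDr.
Qed.

Lemma iter_add t (h1 h2 : S -> 'I_n.+1 -> R) s j :
  iter t (MV R) (fun s j => h1 s j + h2 s j) s j = iter t (MV R) h1 s j + iter t (MV R) h2 s j.
Proof.
elim: t s j => [|t IH] s j //=.
rewrite -Mop_add; congr (MV R _ s j).
by apply/funext => s'; apply/funext => j'; apply: IH.
Qed.

Lemma telesc (V0 G0 : S -> 'I_n.+1 -> R) :
  (forall s j, V0 s j = G0 s j + MV R V0 s j) ->
  forall m s j, V0 s j = \sum_(t < m) iter t (MV R) G0 s j + iter m (MV R) V0 s j.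
Proof.
move=> HV; elim=> [|m IH] s j; first by rewrite big_ord0 add0r.
rewrite IH big_ord_recr -addrA; congr (_ + _).
rewrite iterSr -iter_add; congr (iter m (MV R) _ s j).
by apply/funext => s'; apply/funext => j'; apply: HV.
Qed.

End Glue.

Theorem theorem4 (R : realType) (S A : finType) (d N : nat) (zmin zmax gamma : R)
    (P : S -> A -> S -> R) (C : S -> A -> R)
    (pi : 'rV[R]_d -> S -> A -> R) (p : 'rV[R]_d -> S -> A -> 'I_N -> R) :
  (2 <= N)%N -> zmin < zmax -> 0 <= gamma -> gamma < 1 ->
  (forall s a, (forall s', 0 <= P s a s') /\ \sum_(s' : S) P s a s' = 1) ->
  (forall th s, (forall a, 0 <= pi th s a) /\ \sum_(a : A) pi th s a = 1) ->
  (forall s a th, differentiable (fun th' => pi th' s a) th) ->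
  (forall th, grid_dist_family (p th) /\
              is_proj_bellman_fp zmin zmax gamma P C (pi th) (p th)) ->
  (forall s a i th, differentiable (fun th' => p th' s a i) th) ->
  forall (th : 'rV[R]_d) (s : S) (j : 'I_N),
    (fun n : nat => \sum_(0 <= t < n)
        traj_term zmin zmax gamma P C (pi th) (gN pi (p th) th) s t j)
      @ \oo --> grad (fun th' => \sum_(a : A) pi th' s a * p th' s a j) th.
Proof.
move=> hN hz hg hg1 hP hpi hpidiff hfp hpdiff th s j.
move: p j hN hfp hpdiff; case: N => [|[|n]] p j hN hfp hpdiff //.
have hn : (0 < n.+1)%N by [].
set M := MopV R n.+1 zmin zmax gamma S A P C (pi th).
set G := gN pi (p th) th.
have -> : (fun m : nat => \sum_(0 <= t < m) traj_term zmin zmax gamma P C (pi th) G s t j)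
    = (fun m : nat => \sum_(t < m) iter t (M _) G s j).
  apply/funext => m; rewrite big_mkord; apply: eq_bigr => t _.
  exact: traj_iter.
set Vv := grad _ th.
pose Vk (k : 'I_d) := Vd R d n.+1 S A pi p th (@unitv R d k).
pose Gk (k : 'I_d) := Gd R d n.+1 S A pi p th (@unitv R d k).
pose K := 2 * \sum_(k < d) \sum_s' nrm R n.+1 (Vk k s').
have hK0 : 0 <= K.
  by rewrite mulr_ge0 // sumr_ge0 // => k _; rewrite sumr_ge0 // => s' _; apply: nrm_ge0.
have bound : forall m, `|Vv - \sum_(t < m) iter t (M _) G s j| <= gamma ^+ m * K.
  move=> m; rewrite [leLHS]/Num.norm /= mx_normrE; apply/bigmax_leP; split.
    by rewrite mulr_ge0 // exprn_ge0.
  move=> [i k] _ /=; rewrite (ord1 i) !mxE summxE.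
  have e1 : 'D_(@unitv R d k) (fun th' => \sum_a pi th' s a * p th' s a j) th = Vk k s j by [].
  have e2 : forall t, iter t (M _) G s j 0 k = iter t (M R) (Gk k) s j.
    move=> t; rewrite /M iter_comp; congr (iter t _ _ s j).
    apply/funext => s'; apply/funext => j'; rewrite /G /gN /Gk /Gd summxE.
    by apply: eq_bigr => a _; rewrite mxE /grad mxE.
  rewrite e1 (eq_bigr _ (fun (t : 'I_m) _ => e2 t)).
  have HT : forall s' j', Vk k s' j' = Gk k s' j' + M R (Vk k) s' j'.
    by move=> s' j'; rewrite /Vk /Gk (@VdG R d n.+1 zmin zmax gamma S A P C pi p hpidiff hfp hpdiff th).
  rewrite (@telesc R n.+1 zmin zmax gamma S A P C (pi th) (Vk k) (Gk k) HT m s j).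
  rewrite addrC addKr.
  have H0 : forall s', \sum_j Vk k s' j = 0.
    by move=> s'; apply: (@sum_Vd R d n.+1 zmin zmax gamma S A P C pi p hpi hpidiff hfp hpdiff).
  apply: le_trans (@iter_coord R n.+1 zmin zmax hn hz gamma hg S A P C (pi th) hP (hpi th) (Vk k) H0 m s j) _.
  rewrite mulrCA; apply: ler_wpM2l; first exact: exprn_ge0.
  rewrite /K; apply: ler_wpM2l => //.
  rewrite (bigD1 k) //= lerDl; apply: sumr_ge0 => k' _; apply: sumr_ge0 => s' _; exact: nrm_ge0.
have hc : (fun m : nat => gamma ^+ m * K) @ \oo --> 0.
  have := @cvgMr_tmp _ _ _ _ (fun m : nat => gamma ^+ m) 0 K (@cvg_expr R gamma _).
  rewrite mul0r; apply.
  by rewrite ger0_norm.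
apply/cvgrPdist_le => eps heps.
near=> m.
apply: le_trans (bound m) _.
apply: le_trans (ler_norm _) _.
near: m; exact: (cvgr0_norm_le _ hc eps heps).
Unshelve. all: by end_near.
Qed.
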